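(* For every integer $M\ge0$, the poset $(\mathrm{RL},\le_{RL})$ is noetherian: it contains no infinite antichain.
   Context: Fix an integer $M\ge0$. A reading list of type $(d,n)$ is a tuple $S=(S^1,\dots,S^n)$ of $d$-element subsets of $[Md]=\{1,\dots,Md\}$ (each $S^i$ viewed as an increasing word). $\mathrm{RL}$ denotes the set of all reading lists of all types. For $S=(S^1,\dots,S^n)$ of type $(d,n)$ and $T=(T^1,\dots,T^m)$ of type $(e,m)$, define $S\le_{RL}T$ iff there exist indices $1\le k_1<k_2<\cdots<k_n\le m$ and maps $f_i:S^i\to T^{k_i}$ ($i=1,\dots,n$), each strictly increasing, such that $f_i(x)=f_j(x)$ for all $i,j$ and all $x\in S^i\cap S^j$. An antichain is a sequence of pairwise incomparable elements. *)

(* Defs.v *)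
From mathcomp Require Import all_boot.
Set Implicit Arguments. Unset Strict Implicit. Unset Printing Implicit Defensive.

(* A reading list is a finite sequence of words S = [:: S^1; ...; S^n];
   it is a reading list of type (d,n) for the fixed M when every word is a
   d-element subset of [Md] = {1,...,Md}, written as a strictly increasing word. *)
Definition is_RL (M : nat) (S : seq (seq nat)) : Prop :=
  exists d : nat,
    all (fun w => [&& sorted ltn w, size w == d & all (fun x => 0 < x <= M * d) w]) S.

Definition RL_le (S T : seq (seq nat)) : Prop :=
  exists (k : nat -> nat) (f : nat -> nat -> nat),
    [/\ (forall i j, i < j -> j < size S -> k i < k j),
        (forall i, i < size S -> k i < size T),
        (forall i x, i < size S -> x \in nth [::] S i -> f i x \in nth [::] T (k i)),
        (forall i x y, i < size S -> x \in nth [::] S i -> y \in nth [::] S i ->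
            x < y -> f i x < f i y)
      & (forall i j x, i < size S -> j < size S ->
            x \in nth [::] S i -> x \in nth [::] S j -> f i x = f j x)].

Definition RL_infinite_antichain (M : nat) (A : nat -> seq (seq nat)) : Prop :=
  (forall i, is_RL M (A i)) /\
  (forall i j, i <> j -> ~ RL_le (A i) (A j)).

(* Main.v *)
From Stdlib Require Import Classical ClassicalEpsilon Lia.
Require Import Defs.
From mathcomp Require Import all_boot zify.
Set Implicit Arguments. Unset Strict Implicit. Unset Printing Implicit Defensive.

Lemma pigeon (U : finType) (h : nat -> U) : exists a, forall N, exists n, N <= n /\ h n = a.
Proof.
suff H: forall s : seq U, (exists N, forall n, N <= n -> h n \in s) ->
  exists a, forall N, exists n, N <= n /\ h n = a.
  apply: (H (enum U)); exists 0 => n _; by rewrite mem_enum.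
elim=> [|a s IH] [N HN]; first by move: (HN N (leqnn _)).
case: (classic (forall N, exists n, N <= n /\ h n = a)) => [Ha|nHa]; first by exists a.
apply: IH.
have [N' HN']: exists N', forall n, N' <= n -> h n <> a.
  apply: NNPP => C; apply: nHa => M; apply: NNPP => C2; apply: C; exists M => n hn ha.
  by apply: C2; exists n.
exists (maxn N N') => n; rewrite geq_max => /andP [h1 h2].
move: (HN n h1); rewrite inE => /orP [/eqP //|//].
by move/HN': h2.
Qed.


Section Higman.
Variable T : finType.

Inductive emb : seq T -> seq T -> Prop :=
| emb_nil t : emb [::] t
| emb_skip s a t : emb s t -> emb s (a :: t)
| emb_keep a s t : emb s t -> emb (a :: s) (a :: t).

Definition bad (f : nat -> seq T) := forall i j, i < j -> ~ emb (f i) (f j).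

Definition ext (p : seq (seq T)) :=
  exists g, bad g /\ forall i, i < size p -> g i = nth [::] p i.

Lemma least_ex (Q : seq T -> Prop) : (exists w, Q w) ->
  exists w, Q w /\ forall w', Q w' -> size w <= size w'.
Proof.
move=> [w Qw].
suff H: forall n w, size w <= n -> Q w ->
   exists w, Q w /\ forall w', Q w' -> size w <= size w' by exact: (H _ w (leqnn _)).
elim=> [|n IH] w0 hs Qw0.
  by exists w0; split=> // w' _; move: hs; rewrite leqn0 => /eqP ->.
case: (classic (exists w', Q w' /\ size w' <= n)) => [[w' [Q' s']]|nH].
  exact: (IH w').
exists w0; split=> // w' Qw'; apply: (leq_trans hs).
case: (leqP (size w') n) => // hle; exfalso; apply: nH; by exists w'.
Qed.

Definition next (p : seq (seq T)) : seq T :=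
  epsilon (inhabits [::]) (fun w => ext (rcons p w) /\
     forall w', ext (rcons p w') -> size w <= size w').

Lemma ext_next p : ext p -> ext (rcons p (next p)) /\
   forall w', ext (rcons p w') -> size (next p) <= size w'.
Proof.
move=> Ep; apply: (epsilon_spec (inhabits [::]) (fun w => ext (rcons p w) /\
     forall w', ext (rcons p w') -> size w <= size w')).
apply: least_ex.
case: Ep => g [bg hg]; exists (g (size p)); exists g; split=> // i.
rewrite size_rcons ltnS nth_rcons leq_eqVlt => /orP [/eqP ->|hi].
  by rewrite ltnn eqxx.
by rewrite hi hg.
Qed.

Fixpoint pre n := if n is m.+1 then rcons (pre m) (next (pre m)) else [::].

Lemma size_pre n : size (pre n) = n.
Proof. by elim: n => //= n IH; rewrite size_rcons IH. Qed.

Definition gmin n := next (pre n).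

Lemma nth_pre n i : i < n -> nth [::] (pre n) i = gmin i.
Proof.
elim: n => // n IH; rewrite ltnS leq_eqVlt => /orP [/eqP ->|hi] /=.
  by rewrite nth_rcons size_pre ltnn eqxx.
by rewrite nth_rcons size_pre hi IH.
Qed.

Lemma ext_pre (b : exists f, bad f) n : ext (pre n).
Proof.
elim: n => [|n IH]; first by case: b => f bf; exists f; split.
exact: (ext_next IH).1.
Qed.

Lemma gmin_bad (b : exists f, bad f) : bad gmin.
Proof.
move=> i j ij E.
case: (ext_pre b j.+1) => h [bh hh].
apply: (bh i j ij).
rewrite !hh ?size_pre //; last by apply: ltn_trans ij _.
by rewrite !nth_pre //; apply: ltn_trans ij _.
Qed.

Lemma emb_skips s t : emb s (behead t) -> emb s t.
Proof. by case: t => //= a t; apply: emb_skip. Qed.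

Theorem higman (f : nat -> seq T) : exists i j, i < j /\ emb (f i) (f j).
Proof.
apply: NNPP => nf.
have b : exists f, bad f.
  exists f => i j ij E; apply: nf; by exists i, j.
have bg := gmin_bad b.
have ne : forall n, gmin n <> [::].
  move=> n E; apply: (bg n n.+1 (ltnSn _)); rewrite E; exact: emb_nil.
have [a Ha] := pigeon (fun n => ohead (gmin n)).
have ex : forall N, exists n, (N <= n) && (ohead (gmin n) == a).
  by move=> N; case: (Ha N) => n [h1 h2]; exists n; rewrite h1 h2 eqxx.
pose sel N := ex_minn (ex N).
have selP : forall N, N <= sel N /\ ohead (gmin (sel N)) = a.
  by move=> N; rewrite /sel; case: ex_minnP => m /andP [h1 /eqP h2] _.
pose phi := fix phi (k : nat) : nat := if k is k'.+1 then sel (phi k').+1 else sel 0.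
have phiS : forall k, phi k < phi k.+1 by move=> k; exact: (selP _).1.
have phiI : forall i j, i < j -> phi i < phi j.
  move=> i; elim=> // j IH; rewrite ltnS leq_eqVlt => /orP [/eqP ->|h]; first exact: phiS.
  exact: ltn_trans (IH h) (phiS j).
have phi0 : forall k, phi 0 <= phi k.
  by case=> // k; apply: ltnW; apply: phiI.
have [x ax] : exists x, a = Some x.
  case Ea: a => [x|]; first by exists x.
  exfalso; case: (selP 0) => _; rewrite Ea.
  by case E: (gmin _) => //; move: (ne (sel 0)); rewrite E.
have gphi : forall k, gmin (phi k) = x :: behead (gmin (phi k)).
  move=> k; have : ohead (gmin (phi k)) = a by case: k => [|k]; exact: (selP _).2.
  by rewrite ax; case: (gmin _) => //= y t [->].
pose g' n := if n < phi 0 then gmin n else behead (gmin (phi (n - phi 0))).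
have bg' : bad g'.
  move=> i j ij; rewrite /g'.
  case: (ltnP j (phi 0)) => hj.
    by rewrite (ltn_trans ij hj); apply: bg.
  case: (ltnP i (phi 0)) => hi.
    move=> E; apply: (bg i (phi (j - phi 0))).
      exact: leq_trans hi (phi0 _).
    exact: emb_skips.
  move=> E; apply: (bg (phi (i - phi 0)) (phi (j - phi 0))).
    apply: phiI; rewrite ltn_sub2r //; exact: leq_ltn_trans hi ij.
  by rewrite (gphi (i - phi 0)) (gphi (j - phi 0)); apply: emb_keep.
have e' : ext (rcons (pre (phi 0)) (g' (phi 0))).
  exists g'; split=> // i; rewrite size_rcons size_pre ltnS leq_eqVlt nth_rcons size_pre.
  case/orP=> [/eqP ->|hi]; first by rewrite ltnn eqxx.
  by rewrite hi /g' hi nth_pre.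
have := (ext_next (ext_pre b (phi 0))).2 _ e'.
rewrite /g' ltnn subnn -/(gmin (phi 0)) (gphi 0) /=.
by rewrite ltnn.
Qed.
End Higman.

Lemma emb_idx (T : finType) (x0 : T) s t : emb s t -> exists k : nat -> nat,
  (forall i j, i < j -> j < size s -> k i < k j) /\
  (forall i, i < size s -> k i < size t /\ nth x0 s i = nth x0 t (k i)).
Proof.
elim=> [t'|s' a t' _ [k [h1 h2]]|a s' t' _ [k [h1 h2]]].
- by exists id; split.
- exists (fun i => (k i).+1); split; first by move=> i j ij js; rewrite ltnS h1.
  by move=> i /h2 [p q]; split.
- exists (fun i => if i is i'.+1 then (k i').+1 else 0); split.
    case=> [|i] [|j] //= ij js; rewrite ltnS; exact: h1.
  by case=> [|i] //= /h2 [p q]; split.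
Qed.

Lemma count_sum (T:Type) (P : pred T) s : count P s = \sum_(i <- s) (P i : nat).
Proof. by elim: s => [|a s IH]; rewrite ?big_nil ?big_cons //= IH. Qed.

Lemma word_count (w C : seq nat) B : uniq w -> all (fun x => x < B) w ->
  size w - size C <= count (fun x => (x \in w) && (x \notin C)) (iota 0 B).
Proof.
move=> uw aw.
have pe : perm_eq [seq x <- iota 0 B | x \in w] w.
  apply: uniq_perm => //; first by rewrite filter_uniq ?iota_uniq.
  move=> x; rewrite mem_filter mem_iota add0n.
  case xw: (x \in w) => //=; by move/allP: aw => /(_ x xw) ->.
have -> : count (fun x => (x \in w) && (x \notin C)) (iota 0 B) =
          count (predC (mem C)) w.
  rewrite -(permP pe) count_filter; apply: eq_count => x /=; by rewrite andbC.
have := count_predC (mem C) w.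
have hc : count (mem C) w <= size C.
  rewrite -size_filter; apply: uniq_leq_size; first by rewrite filter_uniq.
  by move=> x; rewrite mem_filter => /andP [].
move=> E; rewrite -E; lia.
Qed.

Lemma sum_const_seq (T : Type) (s : seq T) c : \sum_(i <- s) c = size s * c.
Proof. by elim: s => [|a s IH]; rewrite ?big_nil ?big_cons //= IH mulSn. Qed.

Lemma greedy (T : seq (seq nat)) B q :
  0 < B -> 0 < q ->
  (forall i, i < size T -> uniq (nth [::] T i) /\ all (fun x => x < B) (nth [::] T i)) ->
  forall j n, (forall i, i < size T -> B <= q * (size (nth [::] T i) - j)) ->
  forall I, sorted ltn I -> all (fun i => i < size T) I -> n * q ^ j <= size I ->
  exists C I', [/\ uniq C, size C = j, sorted ltn I' /\ all (fun i => i < size T) I',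
     n <= size I' & forall i x, i \in I' -> x \in C -> x \in nth [::] T i].
Proof.
move=> B0 q0 hT; elim=> [|j IH] n hB I sI aI hn.
  exists [::], I; split=> //; by rewrite expn0 muln1 in hn.
case: n hn => [|n] hn.
  exists (iota 0 j.+1), [::]; split=> //; by rewrite ?iota_uniq ?size_iota.
have hB' : forall i, i < size T -> B <= q * (size (nth [::] T i) - j).
  move=> i /hB h; apply: leq_trans h _; rewrite leq_mul2l leq_sub2l ?orbT //.
have := IH (n.+1 * q) hB' I sI aI; rewrite -mulnA -expnS => /(_ hn) [C [I' [uC sC [sI' aI'] hI' hCI]]].
have I'0 : 0 < size I' by apply: leq_trans hI'; rewrite muln_gt0 q0.
pose P x i := (x \in nth [::] T i) && (x \notin C).
have [x [xB xC hx]] : exists x, [/\ x < B, x \notin C & size I' <= q * count (fun i => x \in nth [::] T i) I'].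
  apply: NNPP => nx.
  have hlt : forall x, x < B -> q * count (P x) I' <= (size I').-1.
    move=> x xB; case xC: (x \in C).
      rewrite (eq_count (a2 := pred0)); last by move=> i; rewrite /P xC andbF.
      by rewrite count_pred0 muln0.
    rewrite -ltnS prednK //.
    rewrite ltnNge; apply/negP => hle; apply: nx; exists x; split=> //; first by rewrite xC.
    apply: leq_trans hle _; rewrite leq_mul2l; apply/orP; right.
    by apply: sub_count => i /andP [].
  have up : \sum_(x < B) q * count (P x) I' <= B * (size I').-1.
    apply: (@leq_trans (\sum_(x < B) (size I').-1)).
      by apply: leq_sum => x _; apply: hlt.
    by rewrite sum_nat_const card_ord.
  have low : size I' * B <= \sum_(x < B) q * count (P x) I'.
    rewrite -big_distrr /=.
    under eq_bigr => x _ do rewrite count_sum.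
    rewrite exchange_big /= big_distrr /= -sum_const_seq big_seq [X in _ <= X]big_seq.
    apply: leq_sum => i iI.
    have iT : i < size T by move/allP: aI' => /(_ i iI).
    apply: leq_trans (hB' i iT) _; rewrite leq_mul2l; apply/orP; right.
    case: (hT i iT) => u a.
    rewrite -sC; apply: leq_trans (word_count C u a) _.
    by rewrite count_sum -(big_mkord xpredT (fun k => (P k i : nat))) /index_iota subn0.
  have := leq_trans low up; rewrite mulnC leq_mul2l.
  case/orP=> [/eqP B00|]; first by rewrite B00 in B0.
  by rewrite -ltnS prednK // ltnn.
exists (x :: C), [seq i <- I' | x \in nth [::] T i]; split.
- by rewrite /= xC uC.
- by rewrite /= sC.
- split; first by apply: sorted_filter => //; exact: ltn_trans.
  by rewrite all_filter; apply/allP => i iI; apply/implyP => _; move/allP: aI' => /(_ i iI).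
- rewrite size_filter -(leq_pmul2l q0); apply: leq_trans hx; by rewrite mulnC.
- move=> i y; rewrite mem_filter inE => /andP [xi iI] /orP [/eqP ->//|yC].
  exact: hCI.
Qed.

Definition dd (S : seq (seq nat)) := size (head [::] S).

Lemma RL_words M S : is_RL M S -> S != [::] -> forall w, w \in S ->
  [/\ sorted ltn w, size w = dd S & all (fun x => 0 < x <= M * dd S) w].
Proof.
case=> d /allP H; case: S H => // w0 S H _ w wS.
have: size w0 = d by case/and3P: (H w0 (mem_head _ _)) => _ /eqP.
rewrite /dd /= => ->.
by case/and3P: (H w wS) => a /eqP b c.
Qed.

Lemma nth_words M S i : is_RL M S -> i < size S ->
  [/\ sorted ltn (nth [::] S i), size (nth [::] S i) = dd S
    & all (fun x => 0 < x <= M * dd S) (nth [::] S i)].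
Proof. move=> R iS; apply: (RL_words R _ (mem_nth _ iS)). by case: (S) iS. Qed.

Lemma RL_nil T : RL_le [::] T.
Proof. by exists id, (fun _ x => x); split. Qed.

Definition pat M n (S : seq (seq nat)) : seq {set 'I_n} :=
  [seq [set i : 'I_n | p.+1 \in nth [::] S i] | p <- iota 0 (M * dd S)].

Lemma case_pat M n (A : nat -> seq (seq nat)) :
  (forall j, is_RL M (A j) /\ size (A j) = n) ->
  exists i j, i < j /\ RL_le (A i) (A j).
Proof.
move=> hA.
have [i [j [ij E]]] := higman (fun j => pat M n (A j)).
exists i, j; split=> //.
have [k [k1 k2]] := emb_idx set0 E.
case: (hA i) => Ri si; case: (hA j) => Rj sj.
rewrite /pat !size_map !size_iota in k1 k2.
exists id, (fun _ x => (k x.-1).+1); split => //.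
- by move=> i0; rewrite si sj.
- move=> i0 x iS xin.
  have i0s : i0 < n by rewrite -si.
  case: (nth_words Ri iS) => _ _ /allP /(_ x xin) /andP [x0 xM].
  have xp : x.-1 < M * dd (A i) by lia.
  case: (k2 _ xp) => kl ke.
  rewrite !(nth_map 0) ?size_iota // !nth_iota // !add0n in ke.
  have : Ordinal i0s \in [set i1 : 'I_n | x.-1.+1 \in nth [::] (A i) i1] by rewrite inE prednK.
  by rewrite ke inE.
- move=> i0 x y iS xin yin xy.
  case: (nth_words Ri iS) => _ _ /allP H.
  case/andP: (H x xin) => x0 xM; case/andP: (H y yin) => y0 yM.
  rewrite ltnS; apply: k1; lia.
Qed.

Definition wl K (S : seq (seq nat)) : seq {set 'I_K} :=
  [seq [set x : 'I_K | val x \in w] | w <- S].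

Lemma case_d M d (A : nat -> seq (seq nat)) :
  (forall j, is_RL M (A j) /\ dd (A j) = d) ->
  exists i j, i < j /\ RL_le (A i) (A j).
Proof.
move=> hA.
have [i [j [ij E]]] := higman (fun j => wl (M * d).+1 (A j)).
exists i, j; split=> //.
have [k [k1 k2]] := emb_idx set0 E.
case: (hA i) => Ri di; case: (hA j) => Rj dj.
rewrite /wl !size_map in k1 k2.
exists k, (fun _ x => x); split => //.
- by move=> i0 /k2 [].
- move=> i0 x i0s xin.
  case: (k2 _ i0s) => kl ke.
  rewrite !(nth_map [::]) // in ke.
  case: (nth_words Ri i0s) => _ _ /allP /(_ x xin) /andP [x0 xM].
  have xK : x < (M * d).+1 by rewrite ltnS -di.
  have : Ordinal xK \in [set x0 : 'I_(M*d).+1 | val x0 \in nth [::] (A i) i0] by rewrite inE.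
  by rewrite ke inE.
Qed.

Lemma case_big M S T : is_RL M S -> is_RL M T -> T != [::] ->
  2 * (M * dd S) + 1 <= dd T -> size S * (4 * M) ^ (M * dd S) <= size T -> RL_le S T.
Proof.
move=> RS RT Tn he hm.
set K := M * dd S in he hm.
set e := dd T in he.
have M0 : 0 < M.
  have [w0 w0T] : exists w0, w0 \in T.
    by case: (T) Tn => // w0 T' _; exists w0; exact: mem_head.
  case: (RL_words RT Tn w0T) => _ sw /allP aw.
  case: w0 w0T sw aw => [|x w] _ sw aw; first by move: he; rewrite /e -sw addn1.
  case/andP: (aw x (mem_head _ _)) => x0 xM; rewrite lt0n; apply/negP => /eqP M00.
  by move: xM; rewrite M00 mul0n leqNgt x0.
have hT : forall i, i < size T -> uniq (nth [::] T i) /\ all (fun x => x < M * e + 1) (nth [::] T i).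
  move=> i iT; case: (nth_words RT iT) => s _ /allP a; split.
    by move: s; rewrite ltn_sorted_uniq_leq => /andP [].
  by apply/allP => x /a /andP [_ h]; rewrite addn1 ltnS.
have hB : forall i, i < size T -> M * e + 1 <= 4 * M * (size (nth [::] T i) - K).
  move=> i iT; case: (nth_words RT iT) => _ -> _.
  have h : e + 1 <= 2 * (e - K) by rewrite /e; lia.
  nia.
have q0 : 0 < 4 * M by rewrite muln_gt0 M0.
have B0 : 0 < M * e + 1 by rewrite addn1.
have KE : K = M * dd S by [].
clearbody K e.
have := greedy (n := size S) B0 q0 hT hB (iota_ltn_sorted 0 (size T)).
case.
- by apply/allP => i; rewrite mem_iota.
- by rewrite size_iota.
move=> C [I' [uC sC [sI' aI'] hI' hCI]].
set Cs := sort leq C.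
have sCs : sorted ltn Cs by rewrite ltn_sorted_uniq_leq sort_uniq uC sort_sorted //; exact: leq_total.
have zCs : size Cs = K by rewrite size_sort.
exists (fun i => nth 0 I' i), (fun _ x => nth 0 Cs x.-1); split.
- move=> i j ij jS; apply: (sorted_ltn_nth ltn_trans 0 sI'); rewrite ?inE //; lia.
- by move=> i iS; apply: (allP aI'); apply: mem_nth; exact: leq_trans iS hI'.
- move=> i x iS xin; apply: hCI; first by apply: mem_nth; exact: leq_trans iS hI'.
  rewrite -(mem_sort leq); apply: mem_nth; rewrite zCs.
  case: (nth_words RS iS) => _ _ /allP /(_ x xin) /andP [x0 xM]; lia.
- move=> i x y iS xin yin xy.
  case: (nth_words RS iS) => _ _ /allP H.
  case/andP: (H x xin) => x0 xM; case/andP: (H y yin) => y0 yM.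
  apply: (sorted_ltn_nth ltn_trans 0 sCs); rewrite ?inE ?zCs; lia.
- by [].
Qed.

Lemma inf_sub (P : pred nat) : (forall N, exists j, N <= j /\ P j) ->
  exists phi : nat -> nat, (forall i j, i < j -> phi i < phi j) /\ forall k, P (phi k).
Proof.
move=> HP.
have ex : forall N, exists n, (N <= n) && P n.
  by move=> N; case: (HP N) => n [h1 h2]; exists n; rewrite h1 h2.
pose sel N := ex_minn (ex N).
have selP : forall N, N <= sel N /\ P (sel N).
  by move=> N; rewrite /sel; case: ex_minnP => m /andP [h1 h2] _.
pose phi := fix phi (k : nat) : nat := if k is k'.+1 then sel (phi k').+1 else sel 0.
exists phi; split; last by case=> [|k]; exact: (selP _).2.
have phiS : forall k, phi k < phi k.+1 by move=> k; exact: (selP _).1.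
move=> i; elim=> // j IH; rewrite ltnS leq_eqVlt => /orP [/eqP ->|h]; first exact: phiS.
exact: ltn_trans (IH h) (phiS j).
Qed.

Theorem mainTheorem7 (M : nat) :
  ~ exists A : nat -> seq (seq nat), RL_infinite_antichain M A.
Proof.
move=> [A [RA anti]].
have ne : forall j, A j != [::].
  move=> j; apply/negP => /eqP E; apply: (anti j j.+1); first lia.
  rewrite E; exact: RL_nil.
have contra : forall phi : nat -> nat, (forall i j, i < j -> phi i < phi j) ->
    (exists i j, i < j /\ RL_le (A (phi i)) (A (phi j))) -> False.
  move=> phi ph [i [j [ij Rl]]]; apply: (anti _ _ _ Rl).
  move: (ph _ _ ij) => h E; by rewrite E ltnn in h.
case: (classic (exists n, forall N, exists j, N <= j /\ size (A j) == n)) => [[n Hn]|Nn].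
  have [phi [ph pP]] := inf_sub Hn.
  apply: (contra phi ph); apply: (@case_pat M n (fun k => A (phi k))) => k.
  by split=> //; apply/eqP; exact: pP.
case: (classic (exists d, forall N, exists j, N <= j /\ dd (A j) == d)) => [[d Hd]|Nd].
  have [phi [ph pP]] := inf_sub Hd.
  apply: (contra phi ph); apply: (@case_d M d (fun k => A (phi k))) => k.
  by split=> //; apply/eqP; exact: pP.
have big : forall L, exists J, forall j, J <= j -> L <= size (A j) /\ L <= dd (A j).
  elim=> [|L [J HJ]]; first by exists 0.
  have [N1 H1] : exists N1, forall j, N1 <= j -> size (A j) != L.
    apply: NNPP => C; apply: Nn; exists L => N; apply: NNPP => C2; apply: C; exists N => j hj.
    apply/negP => E; apply: C2; by exists j.
  have [N2 H2] : exists N2, forall j, N2 <= j -> dd (A j) != L.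
    apply: NNPP => C; apply: Nd; exists L => N; apply: NNPP => C2; apply: C; exists N => j hj.
    apply/negP => E; apply: C2; by exists j.
  exists (maxn J (maxn N1 N2)) => j; rewrite !geq_max => /and3P [a b c].
  case: (HJ j a) => h1 h2.
  by rewrite !ltn_neqAle h1 h2 eq_sym (H1 j b) eq_sym (H2 j c).
pose K := M * dd (A 0).
have [J HJ] := big (maxn (2 * K + 1) (size (A 0) * (4 * M) ^ K)).
case: (HJ J.+1 (leqnSn _)); rewrite !geq_max => /andP [_ h1] /andP [h2 _].
apply: (anti 0 J.+1) => //.
exact: case_big (RA 0) (RA J.+1) (ne J.+1) h2 h1.
Qed.
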